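(* Let $\boldsymbol\lambda,\boldsymbol\mu\in\Pi^l_m$ and $\lambda,\mu\in\Pi$ with $\boldsymbol\lambda\leftrightarrow\lambda$, $\boldsymbol\mu\leftrightarrow\mu$. If $j_{\boldsymbol\lambda,\boldsymbol\mu}\neq0$ (so that (J1) or (J2) holds, with ribbons $\rho,\rho'$), then $N_i(\rho)=N_i(\rho')$ for all $i\in\mathbb Z$, and $|\lambda|=|\mu|$.
   Context: Fix $n,l,m\ge1$, $\mathbf s_l=(s_1,\dots,s_l)\in\mathbb Z^l$, $s=\sum s_b$. Partitions are identified with Young diagrams; $\Pi^l_m$ = $l$-tuples of partitions of total size $m$, nodes $(i,j,b)$ with content $s_b+j-i$ and $\mathrm{res}_n$ = content mod $n$. For a set of nodes $\theta$, $N_i(\theta)=\#\{\gamma\in\theta:\mathrm{res}_n(\gamma)=i\bmod n\}$. Ribbon: nonempty connected skew diagram with no $2\times2$ square; head = node with $j-i$ minimal; $\mathrm{ht}$ = row of head minus row of tail; length = number of nodes. Each $k\in\mathbb Z$ is uniquely $k=c(k)+n(d(k)-1)+nl\,m(k)$, $c(k)\in\{1..n\}$, $d(k)\in\{1..l\}$; $\phi(k)=c(k)+n\,m(k)$. $\boldsymbol\lambda\leftrightarrow\lambda$ iff $\{(\lambda^{(b)}_i+s_b+1-i,b):i\ge1,1\le b\le l\}=\{(\phi(k),d(k)):k\in\{\lambda_i+s+1-i:i\ge1\}\}$. (J1): $\boldsymbol\lambda\ne\boldsymbol\mu$, there are $d\ne d'$ with $\mu^{(d)}\subset\lambda^{(d)}$,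 $\lambda^{(d')}\subset\mu^{(d')}$, $\lambda^{(b)}=\mu^{(b)}$ otherwise, and $\rho:=\lambda^{(d)}/\mu^{(d)}$ (component $d$), $\rho':=\mu^{(d')}/\lambda^{(d')}$ (component $d'$) ribbons of common length $\hat h$. (J2): $\boldsymbol\lambda\ne\boldsymbol\mu$, there is $d$ with $\lambda^{(b)}=\mu^{(b)}$ for $b\ne d$, $\rho:=\lambda^{(d)}/(\lambda^{(d)}\cap\mu^{(d)})$, $\rho':=\mu^{(d)}/(\lambda^{(d)}\cap\mu^{(d)})$ ribbons of common length $\hat h$. $j_{\boldsymbol\lambda,\boldsymbol\mu}\in\mathbb Z$: in case (J1), $(-1)^{\mathrm{ht}\rho+\mathrm{ht}\rho'}$ if $\mathrm{res}_n(\mathrm{hd}\rho)=\mathrm{res}_n(\mathrm{hd}\rho')$, else $0$; in case (J2), $(-1)^{\mathrm{ht}\rho+\mathrm{ht}\rho'}\varepsilon$ with $\varepsilon=1$ if head residues are equal and $\hat h\not\equiv0\pmod n$, $\varepsilon=-1$ if they differ and $\hat h\equiv0\pmod n$, $\varepsilon=0$ otherwise; in all other cases $0$. *)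

(* Defs.v *)
From mathcomp Require Import all_boot all_algebra.
Set Implicit Arguments. Unset Strict Implicit. Unset Printing Implicit Defensive.
Import GRing.Theory Num.Theory.

(* A partition is a weakly decreasing list of positive parts; lambda_i = nth 0 la (i-1). *)
Definition is_partition (la : seq nat) : bool :=
  sorted geq la && all (fun x => 0 < x) la.

(* node (i,j), i = row >= 1, j = column >= 1 *)
Definition in_diag (la : seq nat) (x : nat * nat) : bool :=
  [&& 0 < x.1, 0 < x.2 & x.2 <= nth 0 la x.1.-1].

Definition nodes (la : seq nat) : seq (nat * nat) :=
  flatten [seq [seq (i, j) | j <- iota 1 (nth 0 la i.-1)] | i <- iota 1 (size la)].

Definition skewd (la mu : seq nat) : seq (nat * nat) :=
  [seq x <- nodes la | ~~ in_diag mu x].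

Definition subdiag (mu la : seq nat) : bool := all (in_diag la) (nodes mu).

Definition adj (x y : nat * nat) : bool :=
  ((x.1 == y.1) && ((x.2 == y.2.+1) || (y.2 == x.2.+1))) ||
  ((x.2 == y.2) && ((x.1 == y.1.+1) || (y.1 == x.1.+1))).

Definition connected_nodes (S : seq (nat * nat)) : Prop :=
  forall x y, x \in S -> y \in S ->
    exists p : seq (nat * nat),
      [/\ path adj x p, all (fun z => z \in S) p & last x p = y].

Definition no_square (S : seq (nat * nat)) : Prop :=
  ~ exists i j, all (fun z => z \in S) [:: (i, j); (i.+1, j); (i, j.+1); (i.+1, j.+1)].

Definition is_ribbon (S : seq (nat * nat)) : Prop :=
  [/\ S <> [::], connected_nodes S & no_square S].

Definition dg (x : nat * nat) : int := (x.2%:Z - x.1%:Z)%R.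

Definition rhead (S : seq (nat * nat)) : nat * nat :=
  foldr (fun x h => if (dg x <= dg h)%R then x else h) (nth (0, 0) S 0) S.
Definition rtail (S : seq (nat * nat)) : nat * nat :=
  foldr (fun x h => if (dg h <= dg x)%R then x else h) (nth (0, 0) S 0) S.

Definition ht (S : seq (nat * nat)) : nat := (rhead S).1 - (rtail S).1.

Definition content (sb : int) (x : nat * nat) : int := (sb + x.2%:Z - x.1%:Z)%R.
Definition res (n : nat) (sb : int) (x : nat * nat) : int := ((content sb x) %% n%:Z)%Z.
Definition Ncount (n : nat) (sb : int) (i : int) (th : seq (nat * nat)) : nat :=
  count (fun g => res n sb g == (i %% n%:Z)%Z) th.

(* k = c(k) + n(d(k)-1) + nl m(k), c in 1..n, d in 1..l *)
Definition cfun (n l : nat) (k : int) : int :=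
  (((((k - 1)%R %% (n * l)%:Z)%Z %% n%:Z)%Z) + 1)%R.
Definition dfun (n l : nat) (k : int) : int :=
  (((((k - 1)%R %% (n * l)%:Z)%Z %/ n%:Z)%Z) + 1)%R.
Definition mfun (n l : nat) (k : int) : int := ((k - 1)%R %/ (n * l)%:Z)%Z.
Definition phi (n l : nat) (k : int) : int := (cfun n l k + n%:Z * mfun n l k)%R.

Definition charge (l : nat) (s : 'I_l -> int) : int := (\sum_(b < l) s b)%R.

Definition corresp (n l : nat) (s : 'I_l -> int) (bla : 'I_l -> seq nat) (la : seq nat)
  : Prop :=
  forall (x : int) (b : 'I_l),
    (exists i : nat, 0 < i /\ x = ((nth 0 (bla b) i.-1)%:Z + s b + 1 - i%:Z)%R) <->
    (exists k : int,
       (exists i : nat, 0 < i /\ k = ((nth 0 la i.-1)%:Z + charge s + 1 - i%:Z)%R) /\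
       phi n l k = x /\ dfun n l k = ((val b).+1)%:Z%R).

Definition is_multipartition (l m : nat) (bla : 'I_l -> seq nat) : Prop :=
  (forall b, is_partition (bla b)) /\ \sum_(b < l) sumn (bla b) = m.

Definition J1 (l : nat) (bla bmu : 'I_l -> seq nat) (d d' : 'I_l) : Prop :=
  [/\ bla <> bmu /\ d <> d',
      subdiag (bmu d) (bla d) /\ subdiag (bla d') (bmu d'),
      (forall b, b <> d -> b <> d' -> bla b = bmu b),
      is_ribbon (skewd (bla d) (bmu d)) /\ is_ribbon (skewd (bmu d') (bla d')) &
      size (skewd (bla d) (bmu d)) = size (skewd (bmu d') (bla d'))].

Definition J2 (l : nat) (bla bmu : 'I_l -> seq nat) (d : 'I_l) : Prop :=
  [/\ bla <> bmu, (forall b, b <> d -> bla b = bmu b),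
      is_ribbon (skewd (bla d) (bmu d)), is_ribbon (skewd (bmu d) (bla d)) &
      size (skewd (bla d) (bmu d)) = size (skewd (bmu d) (bla d))].

Definition jJ1 (n l : nat) (s : 'I_l -> int) (bla bmu : 'I_l -> seq nat) (d d' : 'I_l)
  : int :=
  let rho := skewd (bla d) (bmu d) in
  let rho' := skewd (bmu d') (bla d') in
  if res n (s d) (rhead rho) == res n (s d') (rhead rho')
  then ((-1) ^+ (ht rho + ht rho'))%R else 0%R.

Definition jJ2 (n l : nat) (s : 'I_l -> int) (bla bmu : 'I_l -> seq nat) (d : 'I_l)
  : int :=
  let rho := skewd (bla d) (bmu d) in
  let rho' := skewd (bmu d) (bla d) in
  let hh := size rho in
  let eqr := res n (s d) (rhead rho) == res n (s d) (rhead rho') in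
  let eps : int :=
    if eqr && ~~ (n %| hh) then 1%R
    else if ~~ eqr && (n %| hh) then (-1)%R else 0%R in
  ((-1) ^+ (ht rho + ht rho') * eps)%R.

(* Main.v *)
Require Import Defs.
From mathcomp Require Import all_boot all_order all_algebra zify.
Import Order.TTheory GRing.Theory Num.Theory.
Set Implicit Arguments. Unset Strict Implicit. Unset Printing Implicit Defensive.
Local Open Scope ring_scope.


Lemma dm (x q r d : int) : 0 < d -> 0 <= r < d -> x = q * d + r -> (x %/ d)%Z = q /\ (x %% d)%Z = r.
Proof.
move=> d0 hr ->; split.
  rewrite divzMDl; last by lia.
  rewrite divz_small ?addr0 //. move: hr; rewrite abszE gtr0_norm //.
by rewrite modzMDl modz_small.
Qed.

Lemma modz_bnd (x d : int) : 0 < d -> 0 <= (x %% d)%Z < d.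
Proof.
move=> d0; rewrite modz_ge0 ?gt_eqF //=.
have := ltz_mod x (d:=d); rewrite gt_eqF // => /(_ isT).
by rewrite gtr0_norm.
Qed.

Definition Kf (n l b : nat) (x : int) : int :=
  ((x - 1) %% n%:Z)%Z + 1 + (n * b)%:Z + (n * l)%:Z * ((x - 1) %/ n%:Z)%Z.

Section Arith.
Variables (n l : nat) (hn : (0 < n)%N) (hl : (0 < l)%N).


Lemma dm_n (x : int) : x = (x %/ n%:Z)%Z * n%:Z + (x %% n%:Z)%Z /\ 0 <= (x %% n%:Z)%Z < n%:Z.
Proof. split; [exact: divz_eq | apply: modz_bnd; lia]. Qed.

Lemma dm_nl (x : int) : x = (x %/ (n * l)%:Z)%Z * (n * l)%:Z + (x %% (n * l)%:Z)%Z /\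
   0 <= (x %% (n * l)%:Z)%Z < (n * l)%:Z.
Proof. split; [exact: divz_eq | apply: modz_bnd; lia]. Qed.

Lemma dfun_bnd k : 1 <= dfun n l k <= l%:Z.
Proof.
rewrite /dfun.
set r := ((k - 1) %% (n * l)%:Z)%Z.
have [_ hr] := dm_nl (k - 1); rewrite -/r in hr.
have [e1 _] := dm_n r.
set e := (r %/ n%:Z)%Z in e1 *.
have [_ ha] := dm_n r.
nia.
Qed.

Lemma Kf_inv k : Kf n l `|dfun n l k - 1|%N (phi n l k) = k.
Proof.
have := dfun_bnd k; rewrite /Kf /phi /cfun /mfun /dfun.
set r := ((k - 1) %% (n * l)%:Z)%Z.
set q := ((k - 1) %/ (n * l)%:Z)%Z.
have [e0 hr] := dm_nl (k - 1); rewrite -/r -/q in e0 hr.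
set e := (r %/ n%:Z)%Z.
set a := (r %% n%:Z)%Z.
have [e1 ha] := dm_n r; rewrite -/e -/a in e1 ha.
move=> he.
rewrite !PoszM.
have -> : Posz (absz (e + 1 - 1)%R) = e by lia.
have [-> ->] : (((a + 1 + n%:Z * q) - 1) %/ n%:Z)%Z = q /\ (((a + 1 + n%:Z * q) - 1) %% n%:Z)%Z = a.
  by apply: dm; lia.
nia.
Qed.

Lemma Kf_phi b x : (b < l)%N -> phi n l (Kf n l b x) = x /\ dfun n l (Kf n l b x) = (b.+1)%:Z.
Proof.
move=> hb; rewrite /Kf /phi /cfun /mfun /dfun.
have [e1 ha] := dm_n (x - 1).
set a := ((x - 1) %% n%:Z)%Z in e1 ha *.
set q := ((x - 1) %/ n%:Z)%Z in e1 ha *.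
have [-> ->] : ((a + 1 + (n * b)%:Z + (n * l)%:Z * q - 1) %/ (n * l)%:Z)%Z = q /\
            ((a + 1 + (n * b)%:Z + (n * l)%:Z * q - 1) %% (n * l)%:Z)%Z = a + (n * b)%:Z.
  apply: dm; [lia | | rewrite !PoszM; lia].
  rewrite !PoszM; nia.
have [-> ->] : ((a + (n * b)%:Z) %/ n%:Z)%Z = b%:Z /\ ((a + (n * b)%:Z) %% n%:Z)%Z = a.
  apply: dm; [lia | lia | rewrite PoszM; lia].
split; lia.
Qed.

Lemma Kf_window b x (T : nat) : (b < l)%N ->
  (1 - (n * l * T)%:Z <= Kf n l b x) = (1 - (n * T)%:Z <= x).
Proof.
move=> hb; rewrite /Kf.
have [e1 ha] := dm_n (x - 1).
set a := ((x - 1) %% n%:Z)%Z in e1 ha *.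
set q := ((x - 1) %/ n%:Z)%Z in e1 ha *.
rewrite !PoszM.
have hb' : 0 <= a + n%:Z * b%:Z < n%:Z * l%:Z by nia.
have hN : 0 < n%:Z by lia.
have hL : 0 < n%:Z * l%:Z by nia.
have -> : x = 1 + n%:Z * q + a by lia.
case: (lerP 0 (q + T%:Z)) => hq.
  have h1 : 0 <= n%:Z * l%:Z * (q + T%:Z) by rewrite mulr_ge0 // ltW.
  have h2 : 0 <= n%:Z * (q + T%:Z) by rewrite mulr_ge0 // ltW.
  apply/idP/idP => _; nia.
have h1 : n%:Z * l%:Z * (q + T%:Z) <= - (n%:Z * l%:Z).
  have : n%:Z * l%:Z * (q + T%:Z + 1) <= 0 by rewrite pmulr_rle0 //; lia.
  lia.
have h2 : n%:Z * (q + T%:Z) <= - n%:Z.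
  have : n%:Z * (q + T%:Z + 1) <= 0 by rewrite pmulr_rle0 //; lia.
  lia.
apply/idP/idP => h; exfalso; nia.
Qed.

Lemma Kf_inj b b' x x' : (b < l)%N -> (b' < l)%N -> Kf n l b x = Kf n l b' x' -> b = b' /\ x = x'.
Proof.
move=> hb hb' e.
have [p1 d1] := Kf_phi x hb. have [p2 d2] := Kf_phi x' hb'.
rewrite e in p1 d1. split; last by rewrite -p1 p2.
move: d1; rewrite d2; lia.
Qed.

End Arith.


Definition beta (c : int) (la : seq nat) (N : nat) : seq int :=
  [seq (nth 0%N la i)%:Z + c - i%:Z | i <- iota 0 N].

Lemma part_mono la i j : is_partition la -> (i <= j)%N -> (nth 0 la j <= nth 0 la i)%N.
Proof.
case/andP=> so _ hij.
case: (ltnP j (size la)) => hj; last by rewrite nth_default.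
have hi : (i < size la)%N by apply: leq_ltn_trans hj.
have := sorted_leq_nth (leT := geq) _ _ 0%N so; apply => //.
- by move=> a b c h1 h2; apply: leq_trans h2 h1.
- exact: leqnn.
Qed.

Lemma beta_uniq c la N : is_partition la -> uniq (beta c la N).
Proof.
move=> hp; rewrite map_inj_in_uniq ?iota_uniq // => i j _ _ e.
case: (ltngtP i j) => // h; have := part_mono hp (ltnW h); lia.
Qed.

Lemma mem_beta c la N x : (size la <= N)%N ->
  (x \in beta c la N) <-> ((exists i : nat, x = (nth 0%N la i)%:Z + c - i%:Z) /\ c - N%:Z + 1 <= x).
Proof.
move=> hs; split.
  case/mapP=> i; rewrite mem_iota => /andP[_ hi] ->; split; first by exists i.
  lia.
case=> -[i ->] hx; apply/mapP; exists i => //; rewrite mem_iota /=.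
case: (ltnP i N) => // hi; move: hx; rewrite nth_default; [lia | exact: leq_trans hs hi].
Qed.

Lemma idx_conv (f : nat -> nat) (c x : int) :
  (exists i : nat, (0 < i)%N /\ x = (f i.-1)%:Z + c + 1 - i%:Z) <->
  (exists i : nat, x = (f i)%:Z + c - i%:Z).
Proof.
split; first by case=> -[|i] [//= _ ->]; exists i; lia.
by case=> i ->; exists i.+1; split => //=; lia.
Qed.

Section Perm.
Variables (n l : nat) (hn : (0 < n)%N) (hl : (0 < l)%N).
Variables (s : 'I_l -> int) (bla : 'I_l -> seq nat) (la : seq nat) (T N : nat) (Nb : 'I_l -> nat).
Hypothesis hc : corresp n s bla la.
Hypothesis hpla : is_partition la.
Hypothesis hpb : forall b, is_partition (bla b).
Hypothesis hN : N%:Z = charge s + (n * l * T)%:Z.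
Hypothesis hNb : forall b, (Nb b)%:Z = s b + (n * T)%:Z.
Hypothesis hsN : (size la <= N)%N.
Hypothesis hsNb : forall b, (size (bla b) <= Nb b)%N.

Lemma beta_perm : perm_eq (beta (charge s) la N)
   [seq Kf n l (val b) x | b <- enum 'I_l, x <- beta (s b) (bla b) (Nb b)].
Proof.
apply: uniq_perm.
- exact: beta_uniq.
- apply: allpairs_uniq_dep.
  + exact: enum_uniq.
  + move=> b _; exact: beta_uniq.
  + move=> [b1 x1] [b2 x2] _ _ /= e.
    have [e1 e2] := Kf_inj hn hl (ltn_ord b1) (ltn_ord b2) e.
    have eb : b1 = b2 by apply: val_inj.
    by subst.
move=> k; apply/idP/idP.
- move/(@mem_beta _ _ _ _ hsN) => [hk hw].
  have hd := dfun_bnd hn hl k.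
  have hb : (`|dfun n l k - 1|%N < l)%N by lia.
  set b := Ordinal hb.
  have hx : exists i : nat, phi n l k = (nth 0%N (bla b) i)%:Z + s b - i%:Z.
    apply/idx_conv; apply/(hc (phi n l k) b).
    exists k; split; first by apply/idx_conv.
    split => //=; lia.
  apply/allpairsPdep; exists b, (phi n l k); split.
  + exact: mem_enum.
  + apply/mem_beta => //; split => //.
    have hw' : 1 - (n * l * T)%:Z <= Kf n l `|dfun n l k - 1|%N (phi n l k).
      rewrite Kf_inv //; move: hw; rewrite hN; lia.
    rewrite (Kf_window hn hl) // in hw'.
    move: hw'; rewrite hNb; lia.
  + by rewrite Kf_inv.
- case/allpairsPdep => b [x [_ hx ->]].
  move/(@mem_beta _ _ _ _ (hsNb b)): hx => [hi hw].
  have [k' [hk [ek dk]]] : exists k : int,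
       (exists i : nat, (0 < i)%N /\ k = (nth 0%N la i.-1)%:Z + charge s + 1 - i%:Z) /\
       phi n l k = x /\ dfun n l k = ((val b).+1)%:Z.
    by apply/(hc x b); apply/idx_conv.
  have ek' : k' = Kf n l (val b) x.
    rewrite -(Kf_inv hn hl k') ek dk; congr Kf; lia.
  apply/mem_beta => //; split; first by apply/idx_conv; rewrite -ek'.
  have : 1 - (n * l * T)%:Z <= Kf n l (val b) x.
    rewrite (Kf_window hn hl) ?ltn_ord //; move: hw; rewrite hNb; lia.
  rewrite -ek' hN; lia.
Qed.
End Perm.


Section Tele.
Variables (G w : int -> int).
Hypothesis hG : forall t, G (t + 1) - G t = w t.

Lemma Gstep v (k : nat) : G (v + k%:Z) = G v + \sum_(j <- iota 0 k) w (v + j%:Z).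
Proof.
elim: k => [|k IH]; first by rewrite big_nil addr0 addr0.
rewrite -addn1 iotaD big_cat big_seq1 /= addrA -IH PoszD addrA.
by rewrite add0n -(hG (v + k%:Z)) [G (v + k%:Z) + _]addrC subrK.
Qed.

Lemma iota1 m : iota 1 m = map S (iota 0 m).
Proof. by rewrite -[1%N]/(1 + 0)%N iotaDl. Qed.

Lemma telescope c la N : (size la <= N)%N ->
  \sum_(x <- beta c la N) G x = \sum_(i <- iota 0 N) G (c - i%:Z) +
     \sum_(g <- nodes la) w (content c g).
Proof.
move=> hs; rewrite /beta big_map /nodes big_flatten big_map.
have -> : \sum_(i <- iota 0 N) G ((nth 0%N la i)%:Z + c - i%:Z) =
   \sum_(i <- iota 0 N) (G (c - i%:Z) + \sum_(j <- iota 0 (nth 0%N la i)) w (c - i%:Z + j%:Z)).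
  apply: eq_bigr => i _; rewrite -Gstep; congr G; lia.
rewrite big_split /=; congr (_ + _).
rewrite iota1 big_map /=.
rewrite -(subnKC hs) iotaD big_cat /= [X in _ + X]big1_seq ?addr0.
  apply: eq_bigr => i _; rewrite big_map iota1 big_map; apply: eq_bigr => j _.
  rewrite /content /=; congr w; lia.
move=> i; rewrite mem_iota => /andP[_ /andP[h1 _]]; rewrite nth_default ?add0n //.
by rewrite big_nil.
Qed.
End Tele.

Lemma sumn_iota la N : (size la <= N)%N ->
  (sumn la)%:Z = \sum_(i <- iota 0 N) (nth 0%N la i)%:Z.
Proof.
elim: la N => [|a la IH] N /=.
  move=> _; rewrite big1_seq // => i _; by rewrite nth_nil.
case: N => [//|N] hs; rewrite /= big_cons iota1 big_map PoszD; congr (_ + _).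
exact: IH.
Qed.

Lemma sum_beta c la N : (size la <= N)%N ->
  \sum_(x <- beta c la N) x = (sumn la)%:Z + \sum_(i <- iota 0 N) (c - i%:Z).
Proof.
move=> hs; rewrite /beta big_map (sumn_iota hs) -big_split /=.
apply: eq_bigr => i _; lia.
Qed.

Definition wt (n l : nat) (t : int) : int :=
  if (n%:Z %| t)%Z then 1 - n%:Z + (n * l)%:Z else 1.
Definition gf (n l : nat) (x : int) : int :=
  ((x - 1) %% n%:Z)%Z + 1 + (n * l)%:Z * ((x - 1) %/ n%:Z)%Z.
Definition W (n l : nat) (c : int) (S : seq (nat * nat)) : int :=
  \sum_(g <- S) wt n l (content c g).

Lemma gf_step n l t : (0 < n)%N -> gf n l (t + 1) - gf n l t = wt n l t.
Proof.
move=> hn; rewrite /gf /wt addrK.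
have e1 := divz_eq t (n%:Z).
have ha := modz_bnd t (d := n%:Z) ltac:(lia).
set a := (t %% n%:Z)%Z in e1 ha *.
set q := (t %/ n%:Z)%Z in e1 ha *.
have -> : (n%:Z %| t)%Z = (a == 0).
  by rewrite /a; apply/dvdz_mod0P/eqP.
case: eqP => ha0.
  have [-> ->] : ((t - 1) %/ n%:Z)%Z = q - 1 /\ ((t - 1) %% n%:Z)%Z = n%:Z - 1.
    by apply: dm; lia.
  rewrite PoszM; lia.
have [-> ->] : ((t - 1) %/ n%:Z)%Z = q /\ ((t - 1) %% n%:Z)%Z = a - 1.
  by apply: dm; lia.
lia.
Qed.


Lemma size_formula (n l : nat) (hn : (0 < n)%N) (hl : (0 < l)%N)
  (s : 'I_l -> int) (bla : 'I_l -> seq nat) (la : seq nat) (T N : nat) (Nb : 'I_l -> nat) :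
  corresp n s bla la -> is_partition la -> (forall b, is_partition (bla b)) ->
  N%:Z = charge s + (n * l * T)%:Z -> (forall b, (Nb b)%:Z = s b + (n * T)%:Z) ->
  (size la <= N)%N -> (forall b, (size (bla b) <= Nb b)%N) ->
  (sumn la)%:Z + \sum_(i <- iota 0 N) (charge s - i%:Z) =
  \sum_(b <- enum 'I_l) (\sum_(i <- iota 0 (Nb b)) ((n * b)%:Z + gf n l (s b - i%:Z))
      + W n l (s b) (nodes (bla b))).
Proof.
move=> hc hpla hpb hN hNb hsN hsNb.
rewrite -sum_beta // (perm_big _ (beta_perm hn hl hc hpla hpb hN hNb hsN hsNb)).
rewrite big_allpairs_dep /=; apply: eq_bigr => b _.
have -> : \sum_(x <- beta (s b) (bla b) (Nb b)) Kf n l b x =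
          \sum_(x <- beta (s b) (bla b) (Nb b)) ((n * b)%:Z + gf n l x).
  by apply: eq_bigr => x _; rewrite /Kf /gf; lia.
rewrite big_split /= (telescope (G := gf n l) (w := wt n l) (fun t => gf_step l t hn)) //.
by rewrite [in RHS]big_split /= /beta big_map /W addrA.
Qed.


Lemma mem_nodes la x : (x \in nodes la) = in_diag la x.
Proof.
case: x => a b; rewrite /in_diag /=; apply/flatten_mapP/idP.
  case=> i; rewrite mem_iota => /andP[h1 h2] /mapP[j]; rewrite mem_iota => /andP[h3 h4] [-> ->].
  apply/and3P; split => //; lia.
case/and3P=> ha hb hab; exists a.
  rewrite mem_iota ha /=; case: (ltnP a.-1 (size la)) => h; first by lia.
  by move: hab; rewrite nth_default //; lia.
apply/mapP; exists b => //; rewrite mem_iota hb /=; lia.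
Qed.

Lemma nodes_uniq la : uniq (nodes la).
Proof.
rewrite /nodes; apply: allpairs_uniq_dep.
- exact: iota_uniq.
- move=> i _; exact: iota_uniq.
- by move=> [i1 j1] [i2 j2] _ _ /= [-> ->].
Qed.

Lemma W_diff n l c la mu :
  W n l c (nodes la) - W n l c (nodes mu) = W n l c (skewd la mu) - W n l c (skewd mu la).
Proof.
rewrite /W /skewd.
rewrite -(perm_big _ (permEl (perm_filterC (in_diag mu) (nodes la)))) big_cat /=.
rewrite -(perm_big _ (permEl (perm_filterC (in_diag la) (nodes mu)))) big_cat /=.
have -> : \sum_(i <- [seq x <- nodes mu | in_diag la x]) wt n l (content c i) =
          \sum_(i <- [seq x <- nodes la | in_diag mu x]) wt n l (content c i).
  apply: perm_big; apply: uniq_perm; rewrite ?filter_uniq ?nodes_uniq // => x.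
  by rewrite !mem_filter !mem_nodes andbC.
rewrite opprD addrACA subrr add0r.
by [].

Qed.

Lemma W_count n l c S : W n l c S =
  (size S)%:Z + (Ncount n c 0 S)%:Z * ((n * l)%:Z - n%:Z).
Proof.
rewrite /W /Ncount; elim: S => [|g S IH]; first by rewrite big_nil /= mul0r.
rewrite big_cons IH /= /wt /res mod0z.
have -> : ((content c g %% n%:Z)%Z == 0) = (n%:Z %| content c g)%Z.
  by apply/idP/idP => [/eqP/dvdz_mod0P //|/dvdz_mod0P ->].
case: (n%:Z %| content c g)%Z => /=; lia.
Qed.


Lemma rhead_spec (S : seq (nat * nat)) z :
  let f := foldr (fun x h => if (dg x <= dg h)%R then x else h) z S in
  (f = z \/ f \in S) /\ dg f <= dg z /\ (forall y, y \in S -> dg f <= dg y).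
Proof.
elim: S => [|x S [IH1 [IH2 IH3]]] /=; first by split; [left|split].
case: ifP => h.
  split; first by right; rewrite inE eqxx.
  split; first exact: le_trans h IH2.
  move=> y; rewrite inE => /orP[/eqP -> //| /IH3]; exact: le_trans h.
split; first by case: IH1 => [->|hin]; [left | right; rewrite inE hin orbT].
split => // y; rewrite inE => /orP[/eqP -> |/IH3 //].
by move/negbT: h; rewrite -ltNge => /ltW.
Qed.

Lemma rhead_in S : S <> [::] -> rhead S \in S /\ forall y, y \in S -> dg (rhead S) <= dg y.
Proof.
move=> hS; have [[h1|h1] [_ h3]] := rhead_spec S (nth (0, 0)%N S 0).
- split => //; rewrite /rhead h1; apply: mem_nth; move: hS {h1 h3}; case: S => //.
- by [].
Qed.

Lemma adj_dg x y : adj x y -> dg y = dg x + 1 \/ dg y = dg x - 1.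
Proof.
case: x y => [a b] [c d]; rewrite /adj /dg /=.
case/orP => /andP[/eqP e /orP[/eqP h|/eqP h]]; subst => /=; lia.
Qed.

Lemma path_ivt (S : seq (nat * nat)) x p : path adj x p -> all (fun z => z \in S) p -> x \in S ->
  forall v, dg x <= v <= dg (last x p) -> exists2 z, z \in S & dg z = v.
Proof.
elim: p x => [|y p IH] x /=.
  move=> _ _ hx v hv; exists x => //; lia.
move=> /andP[hxy hp] /andP[hy hall] hx v /andP[h1 h2].
case: (eqVneq v (dg x)) => [->|hne]; first by exists x.
apply: (IH y) => //; apply/andP; split => //.
have := adj_dg hxy; lia.
Qed.

Lemma in_diag_down la x y : is_partition la -> in_diag la y -> (0 < x.1)%N -> (0 < x.2)%N ->
  (x.1 <= y.1)%N -> (x.2 <= y.2)%N -> in_diag la x.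
Proof.
move=> hp /and3P[h1 h2 h3] hx1 hx2 l1 l2; apply/and3P; split => //.
have := part_mono (i := x.1.-1) (j := y.1.-1) hp ltac:(lia); lia.
Qed.

Lemma mem_skewd la mu x : (x \in skewd la mu) = in_diag la x && ~~ in_diag mu x.
Proof. by rewrite mem_filter mem_nodes andbC. Qed.

Lemma skew_convex la mu x y z : is_partition la -> is_partition mu ->
  x \in skewd la mu -> z \in skewd la mu ->
  (x.1 <= y.1 <= z.1)%N -> (x.2 <= y.2 <= z.2)%N -> y \in skewd la mu.
Proof.
case: x => x1 x2; case: y => y1 y2; case: z => z1 z2 /=.
move=> hla hmu; rewrite !mem_skewd => /andP[hx1 hx2] /andP[hz1 hz2] /andP[a1 a2] /andP[b1 b2].
have [p1 p2] : (0 < y1)%N /\ (0 < y2)%N by move: hx1 => /and3P[/= ? ? ?]; lia.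
rewrite (in_diag_down hla hz1) //=; apply/negP => hy.
by move: hx2; rewrite (in_diag_down (x := (x1, x2)) hmu hy) //; move: hx1 => /and3P[].
Qed.

Lemma skew_noeq la mu x y : is_partition la -> is_partition mu -> no_square (skewd la mu) ->
  x \in skewd la mu -> y \in skewd la mu -> (x.1 < y.1)%N -> dg x = dg y -> False.
Proof.
case: x => a b; case: y => c d /=.
move=> hla hmu hns hx hy lt e; apply: hns; exists a, b.
have lt2 : (b < d)%N by move: e; rewrite /dg /=; lia.
have hC := skew_convex (y := _) hla hmu hx hy.
rewrite /= hx !hC //=; lia.
Qed.

Lemma skew_dg_inj la mu : is_partition la -> is_partition mu -> no_square (skewd la mu) ->
  {in skewd la mu &, injective dg}.
Proof.
move=> hla hmu hns x y hx hy e.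
case: (ltngtP x.1 y.1) => h.
- by case: (skew_noeq hla hmu hns hx hy h e).
- by case: (skew_noeq hla hmu hns hy hx h (esym e)).
- case: x y e h {hx hy} => [a b] [c d]; rewrite /dg /= => e h; subst.
  by congr pair; lia.
Qed.

Lemma ribbon_perm la mu : is_partition la -> is_partition mu -> is_ribbon (skewd la mu) ->
  perm_eq (map dg (skewd la mu))
          [seq dg (rhead (skewd la mu)) + t%:Z | t <- iota 0 (size (skewd la mu))].
Proof.
move=> hla hmu [hne hcon hns].
set S := skewd la mu in hne hcon hns *.
have uS : uniq S by rewrite filter_uniq ?nodes_uniq.
have uV : uniq (map dg S) by rewrite map_inj_in_uniq //; exact: skew_dg_inj.
have [hh hmin] := rhead_in hne.
set a := dg (rhead S).
have ivl : forall v y, y \in S -> a <= v <= dg y -> v \in map dg S.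
  move=> v y hy hv; have [p [hp hall hl]] := hcon _ _ hh hy.
  have [z hz <-] := path_ivt hp hall hh (v := v) ltac:(rewrite hl; exact: hv).
  exact: map_f.
have uR : forall k, uniq [seq a + t%:Z | t <- iota 0 k].
  move=> k; rewrite map_inj_uniq ?iota_uniq // => t1 t2 e; lia.
apply: uniq_perm => // v; apply/idP/idP.
- case/mapP => y hy ->.
  have hav := hmin y hy.
  case: (ltP (dg y) (a + (size S)%:Z)) => hlt.
    apply/mapP; exists `|dg y - a|%N; last lia.
    rewrite mem_iota; lia.
  have : (size [seq (a + t%:Z)%R | t <- iota 0 (size S).+1] <= size (map dg S))%N.
    apply: uniq_leq_size => // w /mapP[t]; rewrite mem_iota => /andP[_ ht] ->.
    apply: (ivl _ y) => //; lia.
  by rewrite !size_map size_iota ltnn.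
- case/mapP => t; rewrite mem_iota => /andP[_ ht] ->.
  apply/negPn/negP => hnot.
  have : (size (map dg S) <= size [seq (a + u%:Z)%R | u <- iota 0 t])%N.
    apply: uniq_leq_size => // w /mapP[y hy ->].
    have hav := hmin y hy.
    case: (ltP (dg y) (a + t%:Z)) => hlt.
      apply/mapP; exists `|dg y - a|%N; last lia.
      rewrite mem_iota; lia.
    by case/negP: hnot; apply: (ivl _ y) => //; lia.
  rewrite !size_map size_iota; lia.
Qed.


Lemma content_dg c g : content c g = c + dg g.
Proof. rewrite /content /dg; lia. Qed.

Lemma Ncount_ribbon n c r la mu : is_partition la -> is_partition mu -> is_ribbon (skewd la mu) ->
  Ncount n c r (skewd la mu) =
  count (fun t : nat => ((c + dg (rhead (skewd la mu)) + t%:Z) %% n%:Z)%Z == (r %% n%:Z)%Z)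
        (iota 0 (size (skewd la mu))).
Proof.
move=> hla hmu hr; rewrite /Ncount /res.
have -> : count (fun g => (content c g %% n%:Z)%Z == (r %% n%:Z)%Z) (skewd la mu) =
          count (fun v => ((c + v) %% n%:Z)%Z == (r %% n%:Z)%Z) (map dg (skewd la mu)).
  by rewrite count_map; apply: eq_count => g /=; rewrite content_dg.
rewrite (permP (ribbon_perm hla hmu hr)) count_map; apply: eq_count => t /=.
by rewrite addrA.
Qed.

Definition Fc (n h : nat) (R : int) (c : int) : nat :=
  count (fun t : nat => ((c + t%:Z) %% n%:Z)%Z == R) (iota 0 h).

Lemma Fc_res n h R c c' : (c %% n%:Z)%Z = (c' %% n%:Z)%Z -> Fc n h R c = Fc n h R c'.
Proof.
move=> e; apply: eq_count => t /=.
by rewrite -modzDml e modzDml.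
Qed.

Lemma Fc_shift1 n h R c : (n %| h)%N -> Fc n h R (c + 1) = Fc n h R c.
Proof.
move=> hd; rewrite /Fc.
have e1 : count (fun t : nat => ((c + 1 + t%:Z) %% n%:Z)%Z == R) (iota 0 h) =
          count (fun t : nat => ((c + t%:Z) %% n%:Z)%Z == R) (iota 1 h).
  rewrite iota1 count_map; apply: eq_count => t /=; congr (_ == _); congr modz; lia.
rewrite e1.
have e2 := congr1 (count (fun t : nat => ((c + t%:Z) %% n%:Z)%Z == R)) (iotaD 0 h 1).
rewrite addn1 /= count_cat /= addn0 in e2.
have hh : ((c + h%:Z) %% n%:Z)%Z = ((c + 0%:Z) %% n%:Z)%Z.
  have -> : h%:Z = ((h %/ n)%N)%:Z * n%:Z by rewrite -PoszM divnK.
  by rewrite addr0 addrC modzMDl.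
move: e2; rewrite hh.
set A := count _ (iota 1 h); set B := count _ (iota 0 h); lia.
Qed.

Lemma Fc_shift n h R c c' : (n %| h)%N -> Fc n h R c = Fc n h R c'.
Proof.
move=> hd.
have key : forall c (k : nat), Fc n h R (c + k%:Z) = Fc n h R c.
  move=> c0; elim=> [|k IH]; first by rewrite addr0.
  by rewrite -addn1 PoszD addrA Fc_shift1.
case: (lerP c c') => hc.
  have -> : c' = c + (`|c' - c|%N)%:Z by lia.
  by rewrite key.
have -> : c = c' + (`|c - c'|%N)%:Z by lia.
by rewrite key.
Qed.

Lemma term_le (l : nat) (F : 'I_l -> nat) b : (F b <= \sum_(i < l) F i)%N.
Proof. by rewrite (bigD1 b) //= leq_addr. Qed.

Lemma size_diff (n l : nat) (hn : (0 < n)%N) (hl : (0 < l)%N) (s : 'I_l -> int)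
  (bla bmu : 'I_l -> seq nat) (la mu : seq nat) :
  corresp n s bla la -> corresp n s bmu mu -> is_partition la -> is_partition mu ->
  (forall b, is_partition (bla b)) -> (forall b, is_partition (bmu b)) ->
  (sumn la)%:Z - (sumn mu)%:Z = \sum_(b <- enum 'I_l)
     (W n l (s b) (skewd (bla b) (bmu b)) - W n l (s b) (skewd (bmu b) (bla b))).
Proof.
move=> hc1 hc2 hp1 hp2 hb1 hb2.
set T := (size la + size mu + `|charge s|%N +
          \sum_(b < l) (`|s b|%N + size (bla b) + size (bmu b)))%N.
have hT : forall b : 'I_l, (`|s b|%N + size (bla b) + size (bmu b) <= T)%N.
  move=> b; apply: leq_trans (term_le (fun b => (`|s b|%N + size (bla b) + size (bmu b))%N) b) _.
  by rewrite /T leq_addl.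
have hTn : (T <= n * T)%N by nia.
have hTnl : (T <= n * l * T)%N by nia.
set N := absz (charge s + (n * l * T)%:Z)%R.
set Nb := fun b : 'I_l => absz (s b + (n * T)%:Z)%R.
have hN : N%:Z = charge s + (n * l * T)%:Z by rewrite /N; lia.
have hNb : forall b, (Nb b)%:Z = s b + (n * T)%:Z by move=> b; have := hT b; rewrite /Nb; lia.
have hs1 : (size la <= N)%N by rewrite /N /T in hTnl *; lia.
have hs2 : (size mu <= N)%N by rewrite /N /T in hTnl *; lia.
have hsb1 : forall b, (size (bla b) <= Nb b)%N by move=> b; have := hT b; rewrite /Nb; lia.
have hsb2 : forall b, (size (bmu b) <= Nb b)%N by move=> b; have := hT b; rewrite /Nb; lia.
have e1 := size_formula hn hl hc1 hp1 hb1 hN hNb hs1 hsb1.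
have e2 := size_formula hn hl hc2 hp2 hb2 hN hNb hs2 hsb2.
have -> : (sumn la)%:Z - (sumn mu)%:Z =
  ((sumn la)%:Z + \sum_(i <- iota 0 N) (charge s - i%:Z)) -
  ((sumn mu)%:Z + \sum_(i <- iota 0 N) (charge s - i%:Z)) by rewrite opprD addrACA subrr addr0.
rewrite e1 e2 -sumrB; apply: eq_bigr => b _.
by rewrite opprD addrACA subrr add0r W_diff.
Qed.


Lemma skewd_nil mu la : subdiag mu la -> skewd mu la = [::].
Proof.
rewrite /subdiag /skewd; elim: (nodes mu) => //= x s IH /andP[-> h] /=.
exact: IH.
Qed.

Lemma W_nil n l c : W n l c [::] = 0.
Proof. by rewrite /W big_nil. Qed.

Close Scope ring_scope.
Unset Implicit Arguments.
Theorem mainTheorem10 (n l m : nat) (s : 'I_l -> int)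
  (bla bmu : 'I_l -> seq nat) (la mu : seq nat) :
  0 < n -> 0 < l -> 0 < m ->
  is_multipartition m bla -> is_multipartition m bmu ->
  is_partition la -> is_partition mu ->
  corresp n s bla la -> corresp n s bmu mu ->
  (forall d d' : 'I_l, J1 bla bmu d d' -> jJ1 n s bla bmu d d' <> 0%R ->
     (forall r : int, Ncount n (s d) r (skewd (bla d) (bmu d)) =
                      Ncount n (s d') r (skewd (bmu d') (bla d'))) /\
     sumn la = sumn mu) /\
  (forall d : 'I_l, J2 bla bmu d -> jJ2 n s bla bmu d <> 0%R ->
     (forall r : int, Ncount n (s d) r (skewd (bla d) (bmu d)) =
                      Ncount n (s d) r (skewd (bmu d) (bla d))) /\
     sumn la = sumn mu).
Proof.
move=> hn hl hm [hbla _] [hbmu _] hpla hpmu hc1 hc2.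
have hsd := size_diff hn hl hc1 hc2 hpla hpmu hbla hbmu.
rewrite big_enum /= in hsd.
split.
- move=> d d' [[hne hdd] [sub1 sub2] heq [rib1 rib2] hsz] hj.
  set rho := skewd (bla d) (bmu d) in hsz hj *.
  set rho' := skewd (bmu d') (bla d') in hsz hj *.
  have hres : res n (s d) (rhead rho) = res n (s d') (rhead rho').
    by move: hj; rewrite /jJ1 -/rho -/rho'; case: eqP.
  have hN : forall r, Ncount n (s d) r rho = Ncount n (s d') r rho'.
    move=> r; rewrite /rho /rho' !Ncount_ribbon ?hbla ?hbmu // -/rho -/rho' hsz.
    change (Fc n (size rho') (r %% n%:Z)%Z (s d + dg (rhead rho)) =
            Fc n (size rho') (r %% n%:Z)%Z (s d' + dg (rhead rho'))).
    by apply: Fc_res; move: hres; rewrite /res !content_dg.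
  split => //.
  move: hsd; rewrite (bigD1 d) //= (bigD1 d') /=; last by apply/eqP => e; apply: hdd.
  rewrite big1; last first.
    by move=> i /andP[/eqP h1 /eqP h2]; rewrite heq // subrr.
  rewrite (skewd_nil sub1) (skewd_nil sub2) !W_nil -/rho -/rho' !W_count hsz (hN 0%R).
  lia.
- move=> d [hne heq rib1 rib2 hsz] hj.
  set rho := skewd (bla d) (bmu d) in hsz hj rib1 *.
  set rho' := skewd (bmu d) (bla d) in hsz hj rib2 *.
  have hcase : res n (s d) (rhead rho) = res n (s d) (rhead rho') \/ (n %| size rho)%N.
    move: hj; rewrite /jJ2 -/rho -/rho'.
    case: eqP => [e _|_]; first by left.
    case: (n %| size rho) => /= hj; [by right | exfalso; apply: hj; exact: GRing.mulr0].
  have hN : forall r, Ncount n (s d) r rho = Ncount n (s d) r rho'.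
    move=> r; rewrite /rho /rho' !Ncount_ribbon ?hbla ?hbmu // -/rho -/rho' hsz.
    change (Fc n (size rho') (r %% n%:Z)%Z (s d + dg (rhead rho)) =
            Fc n (size rho') (r %% n%:Z)%Z (s d + dg (rhead rho'))).
    case: hcase => [hres|hdv].
      by apply: Fc_res; move: hres; rewrite /res !content_dg.
    by apply: Fc_shift; rewrite -hsz.
  split => //.
  move: hsd; rewrite (bigD1 d) //= big1; last first.
    move=> i /eqP h1; rewrite heq // subrr //.
  rewrite -/rho -/rho' !W_count hsz (hN 0%R).
  lia.
Qed.
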